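(* Let $M\in M_n(\mathbb{Z})$ and let $\mu$ be an integer such that $M$ is $\mu$-collapsed. Then $|\mu|\le\|M\|+\sqrt2$. If moreover no column vector of $M-\mu\,\mathrm{Id}$ equals a vector $E_{ij}=e_i-e_j$ with $i\neq j$, then $|\mu|\le\|M\|+1$.
   Context: For $M\in M_n(\mathbb{Z})$, $\mathrm{Im}(M)$ is the $\mathbb{Z}$-span of its columns; $M$ is spread if the quotient map $\mathbb{Z}^n\to\mathbb{Z}^n/\mathrm{Im}(M)$ is injective on the standard basis $\{e_1,\dots,e_n\}$, and $M$ is $\mu$-collapsed if $M-\mu\,\mathrm{Id}$ is not spread. $\|M\|$ denotes the operator norm $\max_{\|v\|=1}\|Mv\|$ with respect to the Euclidean norm. *)

(* Defs.v *)
From HB Require Import structures.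
From mathcomp Require Import all_boot all_order all_algebra.
From mathcomp Require Import all_classical all_reals.
Set Implicit Arguments. Unset Strict Implicit. Unset Printing Implicit Defensive.
Import Order.TTheory GRing.Theory Num.Theory.
Local Open Scope ring_scope.
Local Open Scope classical_set_scope.

Definition inIm (n : nat) (M : 'M[int]_n) (v : 'cV[int]_n) : Prop :=
  exists x : 'cV[int]_n, M *m x = v.

Definition ebasis (n : nat) (i : 'I_n) : 'cV[int]_n := delta_mx i 0.

(* M is spread: the quotient map Z^n -> Z^n / Im(M) is injective on the
   standard basis, i.e. e_i = e_j mod Im(M) implies i = j. *)
Definition spread (n : nat) (M : 'M[int]_n) : Prop :=
  forall i j : 'I_n, inIm M (ebasis i - ebasis j) -> i = j.

Definition collapsed (n : nat) (M : 'M[int]_n) (mu : int) : Prop :=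
  ~ spread (M - mu%:M).

Definition enorm (R : realType) (n : nat) (v : 'cV[R]_n) : R :=
  Num.sqrt (\sum_i (v i 0) ^+ 2).

Definition opnorm (R : realType) (n : nat) (M : 'M[R]_n) : R :=
  sup [set enorm (M *m v) | v in [set v : 'cV[R]_n | enorm v = 1]].

Definition mxZR (R : realType) (n : nat) (M : 'M[int]_n) : 'M[R]_n :=
  map_mx (fun z : int => z%:~R) M.

(* Main.v *)
Require Import Defs.
From HB Require Import structures.
From mathcomp Require Import all_boot all_order all_algebra.
From mathcomp Require Import all_classical all_reals.
From mathcomp Require Import ring lra zify.
Import Order.TTheory GRing.Theory Num.Theory.
Local Open Scope ring_scope.

Lemma keyR (R : realFieldType) (mu a b s t y : R) :
  1 <= s -> 0 <= t -> t ^+ 2 = s -> 0 <= y ->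
  y ^+ 2 = mu ^+ 2 * s + 2 * mu * (a - b) + 2 ->
  a ^+ 2 + b ^+ 2 <= s -> (2 <= s \/ (a - b) ^+ 2 <= 1) ->
  (`|mu| - 1) * t <= y.
Proof.
move=> s1 t0 ts y0 ys abs hd.
set m := `|mu|.
have m0 : 0 <= m by exact: normr_ge0.
have mm : m ^+ 2 = mu ^+ 2 by rewrite /m real_normK ?num_real.
set q := `|a - b|.
have q0 : 0 <= q by exact: normr_ge0.
have qq : q ^+ 2 = (a - b) ^+ 2 by rewrite /q real_normK ?num_real.
have hmu : - (mu * (a - b)) <= m * q.
  by rewrite /m /q -normrM -normrN; exact: ler_norm.
case: (leP m 1) => hm.
  have : (m - 1) * t <= 0 by rewrite pmulr_lle0 // ?subr_le0 //; nra.
  lra.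
have key : m * q <= m * s - s / 2 + 1.
  case: hd => hd.
    have q2 : q ^+ 2 <= 2 * s.
      have e : (a - b) ^+ 2 + (a + b) ^+ 2 = 2 * (a ^+ 2 + b ^+ 2) by ring.
      have := sqr_ge0 (a + b); rewrite qq; lra.
    have c2 : 2 * s <= (s / 2 + 1) ^+ 2.
      have -> : (s / 2 + 1) ^+ 2 = 2 * s + (s / 2 - 1) ^+ 2 by field.
      by rewrite lerDl sqr_ge0.
    have h1 : q <= s / 2 + 1.
      rewrite leNgt; apply/negP => h.
      have : (s / 2 + 1) ^+ 2 < q ^+ 2 by rewrite ltr_pXn2r // ?nnegrE; lra.
      lra.
    have h2 : q <= s.
      rewrite leNgt; apply/negP => h.
      have : s ^+ 2 < q ^+ 2 by rewrite ltr_pXn2r // ?nnegrE; lra.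
      nra.
    nra.
  have : q <= 1 by nra.
  nra.
have : ((m - 1) * t) ^+ 2 <= y ^+ 2.
  rewrite ys exprMn ts; nra.
nra.
Qed.

Lemma enorm_ge0 (R : realType) n (v : 'cV[R]_n) : 0 <= enorm v.
Proof. exact: sqrtr_ge0. Qed.

Lemma enorm_sq (R : realType) n (v : 'cV[R]_n) :
  enorm v ^+ 2 = \sum_i (v i 0) ^+ 2.
Proof. by rewrite sqr_sqrtr // sumr_ge0 // => i _; exact: sqr_ge0. Qed.

Lemma enormZ (R : realType) n (c : R) (v : 'cV[R]_n) :
  enorm (c *: v) = `|c| * enorm v.
Proof.
rewrite /enorm; under eq_bigr do rewrite mxE exprMn.
by rewrite -mulr_sumr sqrtrM ?sqr_ge0 // sqrtr_sqr.
Qed.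

Lemma opnorm_bounded (R : realType) n (A : 'M[R]_n) :
  has_ubound [set enorm (A *m v) | v in [set v : 'cV[R]_n | enorm v = 1]].
Proof.
exists (Num.sqrt (\sum_i (\sum_k `|A i k|) ^+ 2)).
move=> _ [v /= hv <-].
have hv2 : \sum_i (v i 0) ^+ 2 = 1 by rewrite -enorm_sq hv expr1n.
have hvk : forall k, `|v k 0| <= 1.
  move=> k; have : (v k 0) ^+ 2 <= 1.
    rewrite -hv2 (bigD1 k) //= lerDl sumr_ge0 // => l _; exact: sqr_ge0.
  rewrite -real_normK ?num_real // => h.
  have := normr_ge0 (v k 0); nra.
rewrite /enorm ler_sqrt; last by apply: sumr_ge0 => i _; exact: sqr_ge0.
apply: ler_sum => i _.
have h : `|(A *m v) i 0| <= \sum_k `|A i k|.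
  rewrite mxE; apply: (le_trans (ler_norm_sum _ _ _)); apply: ler_sum => k _.
  by rewrite normrM ler_piMr // normr_ge0.
rewrite -real_normK ?num_real //.
rewrite ler_pXn2r // ?nnegrE ?normr_ge0 //.
by apply: sumr_ge0 => k _; exact: normr_ge0.
Qed.

Theorem proposition3p3 (R : realType) (n : nat) (M : 'M[int]_n) (mu : int) :
  collapsed M mu ->
  `|(mu%:~R : R)| <= opnorm (mxZR R M) + Num.sqrt 2 /\
  ((forall j i k : 'I_n, i != k ->
      col j (M - mu%:M) != ebasis i - ebasis k) ->
   `|(mu%:~R : R)| <= opnorm (mxZR R M) + 1).
Proof.
move=> hcol.
have [i [j [[x hx] nij]]] : exists i j, inIm (M - mu%:M) (ebasis i - ebasis j) /\ i != j.
  case: (pselect (exists i j, inIm (M - mu%:M) (ebasis i - ebasis j) /\ i != j)) => // nex.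
  exfalso; apply: hcol => i j hij; case: (eqVneq i j) => // ne.
  by exfalso; apply: nex; exists i, j.
set d := ebasis i - ebasis j in hx.
have hd : forall k, d k 0 = (k == i)%:R - (k == j)%:R.
  by move=> k; rewrite /d /ebasis !mxE /= !eqxx !andbT.
have hMx : forall k, (M *m x) k 0 = mu * x k 0 + d k 0.
  move=> k; have : M *m x = mu *: x + d.
    by rewrite -hx mulmxBl mul_scalar_mx addrC subrK.
  by move=> ->; rewrite !mxE.
set a := x i 0; set b := x j 0.
set s := \sum_k (x k 0) ^+ 2.
have ji : j != i by rewrite eq_sym.
have sumxd : \sum_k x k 0 * d k 0 = a - b.
  under eq_bigr do rewrite hd mulrBr.
  rewrite sumrB (bigD1 i) //= big1 => [|k /negbTE -> ]; last by rewrite mulr0.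
  rewrite (bigD1 j) //= big1 => [|k /negbTE -> ]; last by rewrite mulr0.
  by rewrite !eqxx !mulr1 !addr0.
have sumdd : \sum_k d k 0 ^+ 2 = 2.
  rewrite (bigD1 i) //= (bigD1 j) //= big1; last first.
    by move=> k /andP [/negbTE h1 /negbTE h2]; rewrite hd h1 h2 subrr expr0n.
  by rewrite !hd !eqxx (negbTE nij) (negbTE ji) addr0 /= expr1n.
have SE : \sum_k ((M *m x) k 0) ^+ 2 = mu ^+ 2 * s + 2 * mu * (a - b) + 2.
  under eq_bigr do rewrite hMx.
  have e : forall k, (mu * x k 0 + d k 0) ^+ 2
     = mu ^+ 2 * x k 0 ^+ 2 + 2 * mu * (x k 0 * d k 0) + d k 0 ^+ 2.
    by move=> k; ring.
  under eq_bigr do rewrite e.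
  by rewrite !big_split /= -!mulr_sumr sumxd sumdd.
have abs : a ^+ 2 + b ^+ 2 <= s.
  rewrite /s (bigD1 i) //= (bigD1 j) //= addrA lerDl.
  by apply: sumr_ge0 => k _; exact: sqr_ge0.
have s1 : 1 <= s.
  have s0 : 0 <= s by apply: sumr_ge0 => k _; exact: sqr_ge0.
  suff sn0 : s != 0 by lia.
  apply/negP => /eqP hs0.
  have h := (psumr_eq0P (fun k _ => sqr_ge0 (x k 0)) hs0).
  have x0 : x = 0.
    apply/matrixP => k l; rewrite (ord1 l) mxE.
    by apply/eqP; rewrite -sqrf_eq0; apply/eqP; apply: h => //; exact: sqr_ge0.
  move: hx; rewrite x0 mulmx0 => /matrixP /(_ i 0).
  rewrite hd !mxE eqxx (negbTE nij) /= subr0; lia.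
have hdisj : 2 <= s \/ (a - b) ^+ 2 <= 1.
  case: (lerP 2 s) => h; [by left | right].
  have : a ^+ 2 + b ^+ 2 <= 1 by lia.
  move=> h2; nia.
set Mr := mxZR R M.
set xr := map_mx (intr : int -> R) x.
have MxE : Mr *m xr = map_mx (intr : int -> R) (M *m x) by rewrite map_mxM.
set t := enorm xr; set y := enorm (Mr *m xr).
have t2 : t ^+ 2 = s%:~R.
  rewrite /t enorm_sq /s rmorph_sum; apply: eq_bigr => k _.
  by rewrite mxE rmorphXn.
have y2 : y ^+ 2 = (mu%:~R) ^+ 2 * s%:~R + 2 * mu%:~R * (a%:~R - b%:~R) + 2.
  rewrite /y enorm_sq MxE.
  have -> : \sum_k (map_mx (intr : int -> R) (M *m x) k 0) ^+ 2
      = (\sum_k ((M *m x) k 0) ^+ 2)%:~R.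
    by rewrite rmorph_sum; apply: eq_bigr => k _; rewrite mxE rmorphXn.
  rewrite SE !(rmorphD, rmorphM, rmorphB, rmorphXn, rmorphN, rmorph1) /=; ring.
have s1R : 1 <= (s%:~R : R) by move: s1; rewrite -(ler_int R).
have absR : (a%:~R : R) ^+ 2 + (b%:~R) ^+ 2 <= s%:~R.
  by move: abs; rewrite -(ler_int R) rmorphD !rmorphXn.
have hdisjR : 2 <= (s%:~R : R) \/ ((a%:~R : R) - b%:~R) ^+ 2 <= 1.
  case: hdisj => h; [left | right].
    by move: h; rewrite -(ler_int R).
  by move: h; rewrite -(ler_int R) rmorphXn rmorphB.
have key := @keyR R _ _ _ _ _ _ s1R (@enorm_ge0 R _ xr) t2 (@enorm_ge0 R _ _) y2 absR hdisjR.
have t1 : 1 <= t.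
  have t0 := @enorm_ge0 R _ xr; rewrite -/t in t0; nra.
have tpos : 0 < t by lra.
have hop : `|(mu%:~R : R)| - 1 <= opnorm Mr.
  apply: (@le_trans _ _ (t^-1 * y)).
    by rewrite ler_pdivlMl // mulrC.
  apply: ub_le_sup; first exact: opnorm_bounded.
  exists (t^-1 *: xr).
    by rewrite /= enormZ ger0_norm ?invr_ge0 ?ltW // mulVf // gt_eqF.
  by rewrite -scalemxAr enormZ ger0_norm ?invr_ge0 ?ltW.
have s2 : 1 <= Num.sqrt (2 : R) by rewrite -{1}sqrtr1 ler_sqrt // ler1n.
split; [lra | move=> _; lra].
Qed.
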